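(* Let $n\ge 1$ and let $V=\{(y_1,\dots,y_n)\in\overline{\mathbb{R}}_+^{\,n}\mid y_i>1\text{ for all } i=1,\dots,n\}$. Let $K\subseteq \overline{\mathbb{R}}_+^{\,n}$ be a convex subset with $K\cap V=\emptyset$. Then there are nonnegative real numbers $a_1,\dots,a_n$ with $\sum_{i=1}^n a_i=1$ such that \[\sum_{i=1}^n a_i x_i\le 1<\sum_{i=1}^n a_i y_i\quad\text{for all }(x_1,\dots,x_n)\in K\text{ and all }(y_1,\dots,y_n)\in V.\]
   Context: $\overline{\mathbb{R}}_+=[0,+\infty)\cup\{+\infty\}$ with the usual order, $+\infty$ the top element, and arithmetic extended by $r+\infty=\infty+r=+\infty$ for all $r$, $r\cdot(+\infty)=(+\infty)\cdot r=+\infty$ for $r>0$ and $0\cdot(+\infty)=(+\infty)\cdot 0=0$. $\overline{\mathbb{R}}_+^{\,n}$ carries coordinatewise addition and multiplication by scalars $r\in[0,\infty)$. A subset $K$ of $\overline{\mathbb{R}}_+^{\,n}$ is convex if $ra+(1-r)b\in K$ for all $a,b\in K$ and all real $r\in[0,1]$ (computed with the extended arithmetic). *)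

(* Defs.v *)
From mathcomp Require Import ssreflect ssrfun ssrbool eqtype ssrnat seq fintype.
From Stdlib Require Import Reals.
Open Scope R_scope.
Set Implicit Arguments.
Unset Strict Implicit.

(* Extended reals: finite values and +infinity.  Elements of the
   extended nonnegative half-line are those satisfying [erp_valid]. *)
Inductive erp : Type := Fin (r : R) | Inf.

Definition erp_valid (x : erp) : Prop :=
  match x with Fin r => 0 <= r | Inf => True end.

Definition eadd (x y : erp) : erp :=
  match x, y with
  | Fin a, Fin b => Fin (a + b)
  | _, _ => Inf
  end.

Definition escale (r : R) (x : erp) : erp :=
  match x with
  | Fin a => Fin (r * a)
  | Inf => if Rlt_dec 0 r then Inf else Fin 0
  end.

Definition ele (x y : erp) : Prop :=
  match x, y with
  | Fin a, Fin b => a <= b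
  | _, Inf => True
  | Inf, Fin _ => False
  end.

Definition elt (x y : erp) : Prop :=
  match x, y with
  | Fin a, Fin b => a < b
  | Fin _, Inf => True
  | Inf, _ => False
  end.

Definition in_ERn (n : nat) (x : 'I_n -> erp) : Prop :=
  forall i, erp_valid (x i).

Definition ecomb (n : nat) (r : R) (a b : 'I_n -> erp) : 'I_n -> erp :=
  fun i => eadd (escale r (a i)) (escale (1 - r) (b i)).

Definition econvex (n : nat) (K : ('I_n -> erp) -> Prop) : Prop :=
  forall a b r, K a -> K b -> 0 <= r <= 1 -> K (ecomb r a b).

Definition Vset (n : nat) (y : 'I_n -> erp) : Prop :=
  in_ERn y /\ forall i, elt (Fin 1) (y i).

Definition rsum (n : nat) (f : 'I_n -> R) : R :=
  foldr (fun i acc => f i + acc) 0 (enum 'I_n).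

Definition esum (n : nat) (f : 'I_n -> erp) : erp :=
  foldr (fun i acc => eadd (f i) acc) (Fin 0) (enum 'I_n).

(* Main.v *)
Require Import Defs.
From mathcomp Require Import ssreflect ssrfun ssrbool eqtype ssrnat seq fintype.
From Stdlib Require Import Reals Lra Psatz Classical ClassicalEpsilon.
Open Scope R_scope.

Definition lsum {I : Type} (s : seq I) (f : I -> R) : R :=
  foldr (fun i acc => f i + acc) 0 s.

Arguments lsum : simpl never.
Lemma lsum_nil {I : Type} f : lsum (@nil I) f = 0.
Proof. by []. Qed.
Lemma lsum_cons {I : Type} (i : I) s f : lsum (i :: s) f = f i + lsum s f.
Proof. by []. Qed.

Lemma lsum_ext_in {I : eqType} (s : seq I) f g :
  (forall i, i \in s -> f i = g i) -> lsum s f = lsum s g.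
Proof.
elim: s => [|j s IH] H; first by [].
rewrite !lsum_cons H ?mem_head //; congr (_ + _); apply: IH => i Hi; apply: H.
by rewrite in_cons Hi orbT.
Qed.

Lemma lsum_add {I : Type} (s : seq I) f g :
  lsum s (fun i => f i + g i) = lsum s f + lsum s g.
Proof. elim: s => [|j s IH] /=; rewrite ?lsum_nil ?lsum_cons ?IH; simpl; lra. Qed.

Lemma lsum_sub {I : Type} (s : seq I) f g :
  lsum s (fun i => f i - g i) = lsum s f - lsum s g.
Proof. elim: s => [|j s IH] /=; rewrite ?lsum_nil ?lsum_cons ?IH; simpl; lra. Qed.

Lemma lsum_scal {I : Type} (s : seq I) c f :
  lsum s (fun i => c * f i) = c * lsum s f.
Proof. elim: s => [|j s IH] /=; rewrite ?lsum_nil ?lsum_cons ?IH; simpl; ring. Qed.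

Lemma lsum_le {I : Type} (s : seq I) f g :
  (forall i, f i <= g i) -> lsum s f <= lsum s g.
Proof. move=> H; elim: s => [|j s IH] /=; [rewrite !lsum_nil; lra|]. rewrite !lsum_cons; have := H j; lra. Qed.

Lemma lsum_lt {I : eqType} (s : seq I) f g i0 :
  (forall i, f i <= g i) -> i0 \in s -> f i0 < g i0 -> lsum s f < lsum s g.
Proof.
move=> H; elim: s => [|j s IH] //= Hi Hlt. rewrite !lsum_cons.
move: Hi; rewrite in_cons => /orP [/eqP Hij|Hi].
- subst i0; have := lsum_le s f g H; have := H j; lra.
- have := IH Hi Hlt; have := H j; lra.
Qed.

Lemma lsum0 {I : Type} (s : seq I) : lsum s (fun _ => 0) = 0.
Proof. elim: s => [|j s IH] //=; rewrite lsum_cons IH; lra. Qed.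

Lemma lsum_filter {I : Type} (s : seq I) (p : pred I) g :
  lsum s (fun i => if p i then g i else 0) = lsum (filter p s) g.
Proof.
elim: s => [|j s IH] //=; rewrite lsum_cons IH; case: (p j) => //=; rewrite ?lsum_cons; lra.
Qed.

Definition convex_on {X : Type} (comb : R -> X -> X -> X) (K : X -> Prop) :=
  forall a b r, K a -> K b -> 0 <= r <= 1 -> K (comb r a b).
Definition affine_on {X : Type} (comb : R -> X -> X -> X) (K : X -> Prop) (f : X -> R) :=
  forall a b r, K a -> K b -> 0 <= r <= 1 -> f (comb r a b) = r * f a + (1 - r) * f b.

Lemma div_le x y u v : 0 < y -> 0 < v -> x * v <= u * y -> x / y <= u / v.
Proof. intros Hy Hv H.
replace (x/y) with ((x*v) * / (y*v)) by (field; lra).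
replace (u/v) with ((u*y) * / (y*v)) by (field; lra).
apply Rmult_le_compat_r; [left; apply Rinv_0_lt_compat; nra | exact H]. Qed.

Lemma le_div_mul m u v : 0 < v -> m <= u / v -> m * v <= u.
Proof. intros Hv H. have := Rmult_le_compat_r v _ _ (Rlt_le _ _ Hv) H.
replace (u / v * v) with u by (field; lra). lra. Qed.

Lemma div_le_mul m u v : 0 < v -> u / v <= m -> u <= m * v.
Proof. intros Hv H. have := Rmult_le_compat_r v _ _ (Rlt_le _ _ Hv) H.
replace (u / v * v) with u by (field; lra). lra. Qed.

Lemma key_pair {X : Type} comb (K : X -> Prop) f g x y :
  convex_on comb K -> affine_on comb K f -> affine_on comb K g ->
  (forall z, K z -> f z <= 0 \/ g z <= 0) ->
  K x -> K y -> 0 < f x -> g x <= 0 -> 0 < g y -> f y <= 0 ->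
  g y * f x <= g x * f y.
Proof.
move=> hc hf hg hfg Kx Ky ha hc0 hd hb.
set a := f x in ha *; set c := g x in hc0 *; set b := f y in hb *; set d := g y in hd *.
apply Rnot_lt_le => Hlt.
set r := (d*(a-b) + (-b)*(d-c)) / (2*((a-b)*(d-c))).
have hr : 0 <= r <= 1.
  have HD : 0 < 2*((a-b)*(d-c)) by nra.
  split.
  - apply Rmult_le_reg_r with (2*((a-b)*(d-c))) => //.
    rewrite /r; field_simplify; [nra|lra].
  - apply Rmult_le_reg_r with (2*((a-b)*(d-c))) => //.
    rewrite /r; field_simplify; [nra|lra].
have Kz := hc x y r Kx Ky hr.
have e1 : f (comb r x y) = (d*a - b*c)/(2*(d-c)).
  rewrite (hf x y r Kx Ky hr) -/a -/b /r; field; lra.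
have e2 : g (comb r x y) = (d*a - b*c)/(2*(a-b)).
  rewrite (hg x y r Kx Ky hr) -/c -/d /r; field; lra.
have p1 : 0 < f (comb r x y) by rewrite e1; apply Rdiv_lt_0_compat; lra.
have p2 : 0 < g (comb r x y) by rewrite e2; apply Rdiv_lt_0_compat; lra.
case: (hfg _ Kz); lra.
Qed.
Lemma div_le1 x y : 0 < y -> x <= y -> x / y <= 1.
Proof. intros Hy H. apply Rmult_le_reg_r with y => //.
replace (x / y * y) with x by (field; lra). lra. Qed.

Lemma two_fun {X : Type} comb (K : X -> Prop) f g :
  convex_on comb K -> affine_on comb K f -> affine_on comb K g ->
  (forall x, K x -> f x <= 0 \/ g x <= 0) ->
  exists mu, 0 <= mu <= 1 /\ forall x, K x -> mu * f x + (1 - mu) * g x <= 0.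
Proof.
move=> hc hf hg hfg.
case: (classic (exists x, K x /\ 0 < f x)) => [[x1 [Kx1 Hf1]]|HA]; last first.
  exists 1; split; [lra|] => x Kx.
  have : ~ 0 < f x by move=> h; apply: HA; exists x.
  lra.
case: (classic (exists y, K y /\ 0 < g y)) => [[y1 [Ky1 Hg1]]|HB]; last first.
  exists 0; split; [lra|] => x Kx.
  have : ~ 0 < g x by move=> h; apply: HB; exists x.
  lra.
have gf : forall x, K x -> 0 < f x -> g x <= 0.
  by move=> x Kx h; case: (hfg x Kx) => //; lra.
have fg : forall x, K x -> 0 < g x -> f x <= 0.
  by move=> x Kx h; case: (hfg x Kx) => //; lra.
pose E := fun t => exists y, K y /\ 0 < g y /\ t = g y / (g y - f y).
have ub : forall x, K x -> 0 < f x -> forall t, E t -> t <= - g x / (f x - g x).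
  move=> x Kx hx t [y [Ky [hy ->]]].
  have := key_pair _ _ _ _ x y hc hf hg hfg Kx Ky hx (gf x Kx hx) hy (fg y Ky hy).
  have := gf x Kx hx; have := fg y Ky hy => h1 h2 h3.
  apply: div_le; nra.
have [mu [Hub Hlub]] : {m | is_lub E m}.
  apply: completeness.
  - exists (- g x1 / (f x1 - g x1)) => t Et; exact: ub x1 Kx1 Hf1 t Et.
  - exists (g y1 / (g y1 - f y1)); exists y1; split => //.
have beta_le : forall y, K y -> 0 < g y -> g y / (g y - f y) <= mu.
  move=> y Ky hy; apply: Hub; exists y; split => //.
have le_alpha : forall x, K x -> 0 < f x -> mu <= - g x / (f x - g x).
  move=> x Kx hx; apply: Hlub => t Et; exact: ub x Kx hx t Et.
have mu0 : 0 <= mu.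
  have := beta_le y1 Ky1 Hg1; have := fg y1 Ky1 Hg1 => h1 h2.
  have : 0 < g y1 / (g y1 - f y1) by apply: Rdiv_lt_0_compat; lra.
  lra.
have mu1 : mu <= 1.
  have := le_alpha x1 Kx1 Hf1; have := gf x1 Kx1 Hf1 => h1 h2.
  have : - g x1 / (f x1 - g x1) <= 1 by apply: div_le1; lra.
  lra.
exists mu; split; [lra|] => x Kx.
case: (Rlt_or_le 0 (f x)) => hx.
  have h1 := gf x Kx hx.
  have hp : 0 < f x - g x by lra.
  have := le_div_mul _ _ _ hp (le_alpha x Kx hx). nra.
case: (Rlt_or_le 0 (g x)) => hy.
  have h1 := fg x Kx hy.
  have hp : 0 < g x - f x by lra.
  have := div_le_mul _ _ _ hp (beta_le x Kx hy). nra.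
nra.
Qed.

Lemma multi {X : Type} comb (K : X -> Prop) (I : eqType) (s : seq I) (f : I -> X -> R) :
  convex_on comb K -> uniq s -> s <> [::] ->
  (forall i, i \in s -> affine_on comb K (f i)) ->
  (forall x, K x -> exists i, i \in s /\ f i x <= 0) ->
  exists a : I -> R, (forall i, 0 <= a i) /\ lsum s a = 1 /\
    forall x, K x -> lsum s (fun i => a i * f i x) <= 0.
Proof.
elim: s K => [|j s IH] K hc hu hne haff hex; first by [].
case: s IH hu hne haff hex => [|j' s'] IH hu hne haff hex.
  exists (fun i => if i == j then 1 else 0); split; [move=> i; case: (_ == _); lra|].
  split; first by rewrite lsum_cons lsum_nil eqxx; lra.
  move=> x Kx; rewrite lsum_cons lsum_nil eqxx.
  case: (hex x Kx) => i [Hi Hle]; move: Hi; rewrite mem_seq1 => /eqP Hij; subst i; lra.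
set s := j' :: s' in IH hu haff hex *.
move: hu => /= /andP [hjs hus].
pose K' := fun x => K x /\ 0 < f j x.
have hfj := haff j (mem_head _ _).
have hc' : convex_on comb K'.
  move=> a b r [Ka ha] [Kb hb] hr; split; first exact: hc.
  rewrite (hfj a b r Ka Kb hr); nra.
have haff' : forall i, i \in s -> affine_on comb K' (f i).
  move=> i Hi a b r [Ka _] [Kb _] hr; apply: (haff i) => //; by rewrite in_cons Hi orbT.
have hex' : forall x, K' x -> exists i, i \in s /\ f i x <= 0.
  move=> x [Kx hx]; case: (hex x Kx) => i [Hi Hle].
  move: Hi; rewrite in_cons => /orP [/eqP Hij|Hi]; first by subst i; lra.
  by exists i.
have [b [hb0 [hb1 hbK]]] := IH K' hc' hus ltac:(by []) haff' hex'.
pose g := fun x => lsum s (fun i => b i * f i x).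
have hg : affine_on comb K g.
  move=> x y r Kx Ky hr; rewrite /g.
  rewrite (lsum_ext_in _ _ (fun i => r * (b i * f i x) + (1 - r) * (b i * f i y))).
    by rewrite lsum_add !lsum_scal.
  move=> i Hi; rewrite (haff i _ x y r Kx Ky hr); [ring|by rewrite in_cons Hi orbT].
have hfg : forall x, K x -> g x <= 0 \/ f j x <= 0.
  move=> x Kx; case: (Rlt_or_le 0 (f j x)) => h; [left; exact: hbK|right; lra].
have [mu [hmu hmuK]] := two_fun _ _ _ _ hc hg hfj hfg.
exists (fun i => if i == j then 1 - mu else mu * b i).
have hneq : forall i, i \in s -> (i == j) = false.
  move=> i Hi; apply/negbTE; apply/negP => /eqP Hij; subst i; by rewrite Hi in hjs.
split; first by move=> i; case: (_ == _); [lra|have := hb0 i; nra].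
split.
  rewrite lsum_cons eqxx (lsum_ext_in _ _ (fun i => mu * b i)).
    by rewrite lsum_scal hb1; ring.
  by move=> i Hi; rewrite hneq.
move=> x Kx; rewrite lsum_cons eqxx (lsum_ext_in _ _ (fun i => mu * (b i * f i x))).
  rewrite lsum_scal; have := hmuK x Kx; rewrite /g; lra.
by move=> i Hi; rewrite hneq //; ring.
Qed.
Definition lesum {I : Type} (s : seq I) (g : I -> erp) : erp :=
  foldr (fun i acc => eadd (g i) acc) (Fin 0) s.

Lemma lesum_fin {I : Type} (s : seq I) g h :
  (forall i, g i = Fin (h i)) -> lesum s g = Fin (lsum s h).
Proof. move=> H; elim: s => [|j s IH] //=. rewrite IH H lsum_cons //. Qed.

Lemma eadd_Inf_r x : eadd x Inf = Inf. Proof. by case: x. Qed.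

Lemma lesum_inf {I : eqType} (s : seq I) g i :
  i \in s -> g i = Inf -> lesum s g = Inf.
Proof.
move=> Hi Hg; elim: s Hi => [|j s IH] //=; rewrite in_cons => /orP [/eqP Hij|Hi].
  by subst; rewrite Hg.
by rewrite IH // eadd_Inf_r.
Qed.

Lemma escale_Inf r : 0 < r -> escale r Inf = Inf.
Proof. move=> h /=; case: (Rlt_dec 0 r) => //. Qed.

Definition inf_at {n : nat} (K : ('I_n -> erp) -> Prop) (i : 'I_n) :=
  exists x, K x /\ x i = Inf.

Lemma all_inf {n : nat} (K : ('I_n -> erp) -> Prop) (hconv : econvex K) x0 :
  K x0 -> forall s : seq 'I_n, (forall j, j \in s -> inf_at K j) ->
  exists x, K x /\ forall j, j \in s -> x j = Inf.
Proof.
move=> Kx0; elim => [|j s IH] H; first by exists x0.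
have [x [Kx Hx]] := IH (fun i Hi => H i ltac:(by rewrite in_cons Hi orbT)).
have [w [Kw Hw]] := H j (mem_head _ _).
exists (ecomb (1/2) x w); split; first by apply: hconv => //; lra.
move=> i; rewrite in_cons => /orP [/eqP Hij|Hi].
  by subst i; rewrite /ecomb Hw escale_Inf ?eadd_Inf_r //; lra.
by rewrite /ecomb Hx // escale_Inf //; lra.
Qed.

Lemma exists_r {I : eqType} (s : seq I) (v : I -> R) :
  (forall i, i \in s -> 1 < v i) -> exists r, 0 <= r < 1 /\ forall i, i \in s -> 1 < r * v i.
Proof.
elim: s => [|j s IH] H; first by exists 0; split; [lra|].
have [r [hr Hr]] := IH (fun i Hi => H i ltac:(by rewrite in_cons Hi orbT)).
have hj := H j (mem_head _ _).
pose rj := (1 / v j + 1) / 2.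
have hrj : rj * v j = (1 + v j) / 2 by rewrite /rj; field; lra.
have hrj1 : rj < 1.
  have : 1 / v j < 1 by apply: (Rmult_lt_reg_r (v j)); [lra|]; replace (1 / v j * v j) with 1 by (field; lra); lra.
  rewrite /rj; lra.
exists (Rmax r rj); split.
  split; [have := Rmax_l r rj; lra|apply Rmax_lub_lt; lra].
move=> i; rewrite in_cons => /orP [/eqP Hij|Hi].
  subst i; have := Rmax_r r rj; nra.
have := Hr i Hi; have := Rmax_l r rj; have := H i ltac:(by rewrite in_cons Hi orbT); nra.
Qed.

Definition re (x : erp) : R := match x with Fin r => r | Inf => 0 end.

Theorem lemma2p6 (n : nat) (hn : (1 <= n)%nat)
  (K : ('I_n -> erp) -> Prop)
  (hK : forall x, K x -> in_ERn x)
  (hconv : econvex K)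
  (hdisj : forall y, K y -> ~ Vset y) :
  exists a : 'I_n -> R,
    (forall i, 0 <= a i) /\ rsum a = 1 /\
    (forall x, K x -> ele (esum (fun i => escale (a i) (x i))) (Fin 1)) /\
    (forall y, Vset y -> elt (Fin 1) (esum (fun i => escale (a i) (y i)))).
Proof.
have [j hj] : exists j, ~ inf_at K j.
  apply: NNPP => Hn.
  have Hall : forall j, inf_at K j by move=> j; apply: NNPP => Hj; apply: Hn; exists j.
  have [x0 [Kx0 _]] := Hall (Ordinal hn).
  have [x [Kx Hx]] := all_inf _ hconv _ Kx0 (enum 'I_n) (fun j _ => Hall j).
  apply: (hdisj x Kx); split; first exact: hK.
  by move=> i; rewrite Hx ?mem_enum.
pose p := fun i => if excluded_middle_informative (inf_at K i) then false else true.
have hp : forall i, p i = true <-> ~ inf_at K i.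
  by move=> i; rewrite /p; case: excluded_middle_informative.
have fin : forall i x, p i -> K x -> exists v, x i = Fin v /\ 0 <= v.
  move=> i x Hi Kx; have := hK x Kx i; case E: (x i) => [v|] /= hv; first by exists v.
  by case/hp: Hi; exists x.
pose T := filter p (enum 'I_n).
pose fr := fun (i : 'I_n) (x : 'I_n -> erp) => re (x i) - 1.
have hjT : j \in T by rewrite mem_filter mem_enum andbT; apply/hp.
have [a0 [ha0 [ha1 haK]]] : exists a : 'I_n -> R, (forall i, 0 <= a i) /\ lsum T a = 1 /\
    forall x, K x -> lsum T (fun i => a i * fr i x) <= 0.
  apply: (multi (fun r a b => ecomb r a b) K _ T fr).
  - exact: hconv.
  - exact: filter_uniq (enum_uniq _).
  - by move=> HT; rewrite HT in hjT.
  - move=> i; rewrite mem_filter => /andP [Hi _] x y r Kx Ky hr.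
    have [v [Hv _]] := fin i x Hi Kx; have [w [Hw _]] := fin i y Hi Ky.
    by rewrite /fr /ecomb Hv Hw /=; ring.
  - move=> x Kx; apply: NNPP => Hn.
    have Hpos : forall i, i \in T -> 1 < re (x i).
      move=> i Hi; apply: Rnot_le_lt => Hle; apply: Hn; exists i; split => //.
      rewrite /fr; lra.
    have [xs [Kxs Hxs]] := all_inf _ hconv _ Kx (filter (predC p) (enum 'I_n))
      (fun i Hi => ltac:(move: Hi; rewrite mem_filter /= => /andP [Hi _];
                           apply: NNPP => Hc; move/hp: Hc; rewrite (negbTE Hi) //)).
    have [r [hr Hr]] := exists_r _ _ Hpos.
    have Kz : K (ecomb r x xs) by apply: hconv => //; lra.
    apply: (hdisj _ Kz); split; first exact: hK.
    move=> i; case Hpi: (p i).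
      have Hi : i \in T by rewrite mem_filter Hpi mem_enum.
      have [v [Hv _]] := fin i x Hpi Kx; have [w [Hw hw]] := fin i xs Hpi Kxs.
      have := Hr i Hi; rewrite /ecomb Hv Hw /= => h; nra.
    rewrite /ecomb Hxs; last by rewrite mem_filter mem_enum /= Hpi.
    rewrite escale_Inf; [by rewrite eadd_Inf_r|lra].
pose a := fun i => if p i then a0 i else 0.
exists a; split; first by move=> i; rewrite /a; case: (p i) => //; lra.
have hsum : lsum (enum 'I_n) a = 1 by rewrite /a lsum_filter.
split; first exact: hsum.
split.
  move=> x Kx.
  change (ele (lesum (enum 'I_n) (fun i => escale (a i) (x i))) (Fin 1)).
  rewrite (lesum_fin _ _ (fun i => if p i then a0 i * re (x i) else 0)).
    rewrite lsum_filter /=.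
    have := haK x Kx.
    rewrite (lsum_ext_in _ _ (fun i => a0 i * re (x i) - a0 i)).
      rewrite lsum_sub ha1 /= -/T; lra.
    by move=> i _; rewrite /fr; ring.
  move=> i; rewrite /a; case Hpi: (p i).
    by have [v [Hv _]] := fin i x Hpi Kx; rewrite Hv.
  case: (x i) => [v|] /=; first by rewrite Rmult_0_l.
  by case: (Rlt_dec 0 0) => [h|h] //; lra.
move=> y [Vy Hy].
change (elt (Fin 1) (lesum (enum 'I_n) (fun i => escale (a i) (y i)))).
have ha : forall i, 0 <= a i by move=> i; rewrite /a; case: (p i) => //; lra.
case: (classic (exists i, 0 < a i /\ y i = Inf)) => [[i [hai hyi]]|Hno].
  by rewrite (lesum_inf _ _ i) ?mem_enum // hyi escale_Inf.
have yi : forall i, y i = Inf -> a i = 0.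
  move=> i hyi; have := ha i; have : ~ 0 < a i by move=> h; apply: Hno; exists i.
  lra.
rewrite (lesum_fin _ _ (fun i => a i * re (y i))); last first.
  move=> i; case E: (y i) => [v|] /=; first by [].
  rewrite (yi i E) Rmult_0_r; by case: (Rlt_dec 0 0) => [h|h] //; lra.
have [i0 hi0] : exists i0, 0 < a i0.
  apply: NNPP => Hn.
  have : lsum (enum 'I_n) a <= lsum (enum 'I_n) (fun _ => 0).
    apply: lsum_le => i; apply: Rnot_lt_le => h; apply: Hn; by exists i.
  rewrite lsum0; lra.
have le : forall i, a i <= a i * re (y i).
  move=> i; have := Hy i; have := ha i; case E: (y i) => [v|] /= h1 h2; first nra.
  rewrite (yi i E); lra.
have lt := lsum_lt (enum 'I_n) a (fun i => a i * re (y i)) i0 le (mem_enum _ _).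
have : a i0 < a i0 * re (y i0).
  have := Hy i0; case E: (y i0) => [v|] /= h; first nra.
  by have := yi i0 E; lra.
move=> h; have := lt h; rewrite hsum /=; lra.
Qed.
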